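(* Let $f\in C^3([0,1])$ be such that $f,f',f'',f'''\geq 0$ on $[0,1]$. Then for every integer $N\geq 1$, $$0\leq \sum_{i=0}^{N}f\left(\frac{i}{N}\right)-N\int_0^1 f(t)\,dt-\frac{f(0)+f(1)}{2}\leq \frac{f'(1)-f'(0)}{4N}.$$ *)

(* Defs.v *)
From Stdlib Require Import Reals Lra.
From Coquelicot Require Import Coquelicot.
Open Scope R_scope.

Definition deriv_on01 (f g : R -> R) : Prop :=
  forall x, 0 <= x <= 1 ->
    filterlim (fun y => (f y - f x) / (y - x))
      (within (fun y => 0 <= y <= 1 /\ y <> x) (locally x)) (locally (g x)).

Definition cont_on01 (f : R -> R) : Prop :=
  forall x, 0 <= x <= 1 ->
    filterlim f (within (fun y => 0 <= y <= 1) (locally x)) (locally (f x)).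

Definition C3_on01 (f f1 f2 f3 : R -> R) : Prop :=
  deriv_on01 f f1 /\ deriv_on01 f1 f2 /\ deriv_on01 f2 f3 /\ cont_on01 f3.

(* Main.v *)
Require Import Defs.
From Stdlib Require Import Reals Lra Lia.
From Coquelicot Require Import Coquelicot.
Open Scope R_scope.

Definition D01 (F G : R -> R) : Prop :=
  forall x, 0 <= x <= 1 -> forall eps, 0 < eps -> exists delta, 0 < delta /\
    forall y, 0 <= y <= 1 -> y <> x -> Rabs (y - x) < delta ->
      Rabs ((F y - F x) / (y - x) - G x) < eps.

Lemma deriv_D (F G : R -> R) : deriv_on01 F G -> D01 F G.
Proof.
  intros H x Hx eps Heps.
  specialize (H x Hx).
  destruct (proj1 (filterlim_locally _ _) H (mkposreal eps Heps)) as [d Hd].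
  exists d. split. apply cond_pos.
  intros y Hy Hyx Hd'. apply (Hd y). exact Hd'. split; auto.
Qed.

Lemma D_cont (F G : R -> R) : D01 F G -> forall x, 0 <= x <= 1 ->
  forall e, 0 < e -> exists d, 0 < d /\ forall y, 0 <= y <= 1 -> Rabs (y - x) < d ->
    Rabs (F y - F x) < e.
Proof.
  intros H x Hx e He.
  destruct (H x Hx 1 Rlt_0_1) as [d [Hd Hq]].
  set (M := Rabs (G x) + 1).
  assert (HM : 0 < M) by (unfold M; pose proof (Rabs_pos (G x)); lra).
  exists (Rmin d (e / M)). split.
  { apply Rmin_pos; auto. apply Rdiv_lt_0_compat; auto. }
  intros y Hy Hyd.
  destruct (Req_dec y x) as [->|Hne].
  { replace (F x - F x) with 0 by ring. rewrite Rabs_R0. auto. }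
  assert (Hyx : y - x <> 0) by lra.
  pose proof (Hq y Hy Hne (Rlt_le_trans _ _ _ Hyd (Rmin_l _ _))) as Hq1.
  set (q := (F y - F x) / (y - x)) in *.
  assert (E : F y - F x = q * (y - x)) by (unfold q; field; auto).
  rewrite E, Rabs_mult.
  assert (Hqb : Rabs q <= M).
  { unfold M. replace q with ((q - G x) + G x) by ring.
    pose proof (Rabs_triang (q - G x) (G x)). lra. }
  assert (Hy2 : Rabs (y - x) < e / M) by (eapply Rlt_le_trans; [exact Hyd| apply Rmin_r]).
  assert (Hpos : 0 < Rabs (y - x)) by (apply Rabs_pos_lt; auto).
  apply Rle_lt_trans with (M * Rabs (y - x)).
  { apply Rmult_le_compat_r; auto. apply Rabs_pos. }
  replace e with (M * (e / M)) by (field; lra).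
  apply Rmult_lt_compat_l; auto.
Qed.

Lemma D_interior (F G : R -> R) : D01 F G -> forall t, 0 < t < 1 ->
  derivable_pt_lim F t (G t).
Proof.
  intros H t Ht eps Heps.
  destruct (H t ltac:(lra) eps Heps) as [d [Hd Hq]].
  assert (Hp : 0 < Rmin d (Rmin t (1 - t))).
  { repeat apply Rmin_pos; lra. }
  exists (mkposreal _ Hp). intros h Hh Hhd. simpl in Hhd.
  pose proof (Rmin_l d (Rmin t (1-t))). pose proof (Rmin_r d (Rmin t (1-t))).
  pose proof (Rmin_l t (1-t)). pose proof (Rmin_r t (1-t)).
  assert (Hb : Rabs h < t /\ Rabs h < 1 - t) by lra.
  destruct Hb as [Hb1 Hb2].
  pose proof (Rle_abs h). pose proof (Rle_abs (-h)). rewrite Rabs_Ropp in *.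
  specialize (Hq (t + h) ltac:(lra) ltac:(lra)).
  replace (t + h - t) with h in Hq by ring. apply Hq. lra.
Qed.

Lemma D_mono (F G : R -> R) (a b : R) : D01 F G -> 0 <= a -> a <= b -> b <= 1 ->
  (forall t, a <= t <= b -> 0 <= G t) -> F a <= F b.
Proof.
  intros H Ha Hab Hb HG.
  destruct (Req_dec a b) as [->|Hne]; [lra|].
  assert (Hlt : a < b) by lra.
  apply Rle_plus_epsilon. intros e He.
  destruct (D_cont F G H a ltac:(lra) (e/2) ltac:(lra)) as [da [Hda Ca]].
  destruct (D_cont F G H b ltac:(lra) (e/2) ltac:(lra)) as [db [Hdb Cb]].
  set (m := (b - a) / 2).
  assert (Hm : 0 < m) by (unfold m; lra).
  set (a' := a + Rmin da m / 2). set (b' := b - Rmin db m / 2).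
  pose proof (Rmin_l da m). pose proof (Rmin_r da m).
  pose proof (Rmin_l db m). pose proof (Rmin_r db m).
  pose proof (Rmin_pos da m Hda Hm). pose proof (Rmin_pos db m Hdb Hm).
  assert (Ha' : a < a' <= a + m / 2) by (unfold a'; lra).
  assert (Hb' : b - m / 2 <= b' < b) by (unfold b'; lra).
  assert (Hmd : b - a = 2 * m) by (unfold m; field).
  assert (Hab' : a' < b') by lra.
  destruct (MVT_cor2 F G a' b' Hab') as [c [Hc1 Hc2]].
  { intros c Hc. apply D_interior; auto. lra. }
  assert (HGc : 0 <= G c) by (apply HG; lra).
  assert (F a' <= F b').
  { assert (0 <= G c * (b' - a')) by (apply Rmult_le_pos; lra). lra. }
  specialize (Ca a' ltac:(lra)). specialize (Cb b' ltac:(lra)).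
  assert (Rabs (a' - a) < da) by (rewrite Rabs_right; unfold a'; lra).
  assert (Rabs (b' - b) < db) by (rewrite Rabs_left; unfold b'; lra).
  specialize (Ca ltac:(assumption)). specialize (Cb ltac:(assumption)).
  pose proof (Rle_abs (-(F a' - F a))). pose proof (Rle_abs (F b' - F b)).
  rewrite Rabs_Ropp in *. lra.
Qed.

Lemma D_affine (F G : R -> R) (s c : R) : D01 F G ->
  D01 (fun y => s * F y + c * y) (fun y => s * G y + c).
Proof.
  intros H x Hx eps Heps.
  destruct (H x Hx (eps / (Rabs s + 1))) as [d [Hd Hq]].
  { apply Rdiv_lt_0_compat; auto. pose proof (Rabs_pos s); lra. }
  exists d. split; auto. intros y Hy Hyx Hyd.
  assert (y - x <> 0) by lra.
  replace ((s * F y + c * y - (s * F x + c * x)) / (y - x) - (s * G x + c))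
    with (s * ((F y - F x) / (y - x) - G x)) by (field; auto).
  rewrite Rabs_mult. specialize (Hq y Hy Hyx Hyd).
  pose proof (Rabs_pos s). pose proof (Rabs_pos ((F y - F x) / (y - x) - G x)).
  apply Rle_lt_trans with ((Rabs s + 1) * Rabs ((F y - F x) / (y - x) - G x)).
  { nra. }
  replace eps with ((Rabs s + 1) * (eps / (Rabs s + 1))) by (field; lra).
  apply Rmult_lt_compat_l; lra.
Qed.

Definition clamp (y : R) := Rmax 0 (Rmin 1 y).

Lemma clamp_in y : 0 <= clamp y <= 1.
Proof. unfold clamp, Rmax, Rmin; repeat destruct Rle_dec; lra. Qed.

Lemma clamp_id y : 0 <= y <= 1 -> clamp y = y.
Proof. intros. unfold clamp, Rmax, Rmin; repeat destruct Rle_dec; lra. Qed.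

Lemma clamp_lip y z : Rabs (clamp y - clamp z) <= Rabs (y - z).
Proof.
  unfold clamp, Rmax, Rmin; repeat destruct Rle_dec;
  unfold Rabs; repeat destruct Rcase_abs; lra.
Qed.

Section Main.
Variables f f1 f2 f3 : R -> R.
Hypothesis HC : C3_on01 f f1 f2 f3.
Hypothesis Hpos : forall x, 0 <= x <= 1 -> 0 <= f x /\ 0 <= f1 x /\ 0 <= f2 x /\ 0 <= f3 x.

Lemma Df : D01 f f1. Proof. apply deriv_D, HC. Qed.
Lemma Df1 : D01 f1 f2. Proof. apply deriv_D, HC. Qed.

Lemma f1_mono x y : 0 <= x -> x <= y -> y <= 1 -> f1 x <= f1 y.
Proof.
  intros. apply (D_mono f1 f2 x y Df1); auto. intros t Ht. apply Hpos. lra.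
Qed.

Lemma tangent x t : 0 <= x <= 1 -> 0 <= t <= 1 -> f x + f1 x * (t - x) <= f t.
Proof.
  intros Hx Ht. destruct (Rle_dec x t).
  - pose proof (D_mono _ _ x t (D_affine f f1 1 (- f1 x) Df)) as M.
    simpl in M. assert (1 * f x + - f1 x * x <= 1 * f t + - f1 x * t).
    { apply M; try lra. intros u Hu. pose proof (f1_mono x u). lra. }
    lra.
  - pose proof (D_mono _ _ t x (D_affine f f1 (-1) (f1 x) Df)) as M.
    simpl in M. assert (-1 * f t + f1 x * t <= -1 * f x + f1 x * x).
    { apply M; try lra. intros u Hu. pose proof (f1_mono u x). lra. }
    lra.
Qed.

Lemma lip x y : 0 <= x <= 1 -> 0 <= y <= 1 -> Rabs (f y - f x) <= (f1 1 + 1) * Rabs (y - x).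
Proof.
  intros Hx Hy.
  pose proof (tangent x y Hx Hy). pose proof (tangent y x Hy Hx).
  pose proof (f1_mono x 1 ltac:(lra) ltac:(lra) ltac:(lra)).
  pose proof (f1_mono y 1 ltac:(lra) ltac:(lra) ltac:(lra)).
  destruct (Hpos x Hx) as [_ [Px _]]. destruct (Hpos y Hy) as [_ [Py _]].
  destruct (Rle_dec x y).
  - rewrite (Rabs_right (y - x)) by lra.
    unfold Rabs; destruct Rcase_abs; nra.
  - rewrite (Rabs_left (y - x)) by lra.
    unfold Rabs; destruct Rcase_abs; nra.
Qed.

Definition g (y : R) := f (clamp y).

Lemma g_cont z : continuous g z.
Proof.
  apply filterlim_locally. intros eps.
  set (M := f1 1 + 1).
  assert (HM : 0 < M).
  { unfold M. destruct (Hpos 1 ltac:(lra)) as [_ [P _]]. lra. }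
  assert (Hd : 0 < eps / M) by (apply Rdiv_lt_0_compat; [apply cond_pos|auto]).
  exists (mkposreal _ Hd). intros y Hy.
  change (Rabs (g y - g z) < eps). change (Rabs (y - z) < eps / M) in Hy.
  unfold g. eapply Rle_lt_trans. apply lip; apply clamp_in.
  fold M. apply Rle_lt_trans with (M * Rabs (y - z)).
  { apply Rmult_le_compat_l; [lra| apply clamp_lip]. }
  replace (pos eps) with (M * (eps / M)) by (field; lra).
  apply Rmult_lt_compat_l; auto.
Qed.

Lemma g_int a b : ex_RInt g a b.
Proof. apply (@ex_RInt_continuous R_CompleteNormedModule). intros; apply g_cont. Qed.


Lemma RInt_aff p q a b : RInt (fun t => p + q * t) a b = p * (b - a) + q * (b * b - a * a) / 2.
Proof.
  apply is_RInt_unique.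
  set (Fp := fun t => p * t + q * (t * t) / 2).
  replace (p * (b - a) + q * (b * b - a * a) / 2) with (minus (Fp b) (Fp a))
    by (unfold minus, plus, opp, Fp; simpl; field).
  apply (@is_RInt_derive R_CompleteNormedModule).
  - intros x _. unfold Fp. auto_derive; auto. field.
  - intros x _. apply continuity_pt_filterlim. reg.
Qed.

Lemma interval_bounds a b : 0 <= a -> a < b -> b <= 1 ->
  (b - a) * (f a + f b) / 2 + (f1 a - f1 b) * (b - a) * (b - a) / 4 <= RInt g a b
  /\ RInt g a b <= (b - a) * (f a + f b) / 2.
Proof.
  intros Ha Hab Hb. split.
  - set (q := (f1 a + f1 b) / 2).
    set (p := (f a + f b) / 2 - f1 a * a / 2 - f1 b * b / 2).
    apply Rle_trans with (RInt (fun t => p + q * t) a b).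
    { rewrite RInt_aff. unfold p, q. right. field. }
    apply RInt_le; try lra.
    + apply (@ex_RInt_continuous R_CompleteNormedModule). intros z _.
      apply continuity_pt_filterlim. reg.
    + apply g_int.
    + intros t Ht. unfold g. rewrite clamp_id by lra.
      pose proof (tangent a t ltac:(lra) ltac:(lra)).
      pose proof (tangent b t ltac:(lra) ltac:(lra)).
      unfold p, q. lra.
  - set (q := (f b - f a) / (b - a)).
    set (p := f a - q * a).
    apply Rle_trans with (RInt (fun t => p + q * t) a b).
    2:{ rewrite RInt_aff. unfold p, q. right. field. lra. }
    apply RInt_le; try lra.
    + apply g_int.
    + apply (@ex_RInt_continuous R_CompleteNormedModule). intros z _.
      apply continuity_pt_filterlim. reg.
    + intros t Ht. unfold g. rewrite clamp_id by lra.
      pose proof (tangent t a ltac:(lra) ltac:(lra)).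
      pose proof (tangent t b ltac:(lra) ltac:(lra)).
      assert (E : p + q * t = ((b - t) * f a + (t - a) * f b) / (b - a))
        by (unfold p, q; field; lra).
      rewrite E. apply Rmult_le_reg_r with (b - a); [lra|].
      unfold Rdiv. rewrite Rmult_assoc, Rinv_l, Rmult_1_r by lra.
      assert (0 <= b - t) by lra. assert (0 <= t - a) by lra.
      nra.
Qed.

Lemma induct (N : nat) : (1 <= N)%nat -> forall k, (k <= N)%nat ->
  0 <= sum_f_R0 (fun i => f (INR i / INR N)) k - (f 0 + f (INR k / INR N)) / 2
        - INR N * RInt g 0 (INR k / INR N)
  /\ sum_f_R0 (fun i => f (INR i / INR N)) k - (f 0 + f (INR k / INR N)) / 2
        - INR N * RInt g 0 (INR k / INR N) <= (f1 (INR k / INR N) - f1 0) / (4 * INR N).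
Proof.
  intros HN. assert (HNp : 0 < INR N) by (apply lt_0_INR; lia).
  induction k as [|k IH]; intros Hk.
  - simpl. replace (0 / INR N) with 0 by (field; lra).
    rewrite RInt_point. unfold zero; simpl.
    replace ((f1 0 - f1 0) / (4 * INR N)) with 0 by (field; lra). lra.
  - specialize (IH ltac:(lia)).
    set (a := INR k / INR N) in *. set (b := INR (S k) / INR N).
    assert (Hba : b - a = 1 / INR N) by (unfold a, b; rewrite S_INR; field; lra).
    assert (Ha0 : 0 <= a) by (unfold a; apply Rdiv_le_0_compat; [apply pos_INR|lra]).
    assert (Hb1 : b <= 1).
    { unfold b. apply (Rmult_le_reg_r (INR N)); auto. unfold Rdiv.
      rewrite Rmult_assoc, Rinv_l, Rmult_1_r, Rmult_1_l by lra. apply le_INR; lia. }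
    assert (Hab : a < b) by (assert (0 < 1 / INR N) by (apply Rdiv_lt_0_compat; lra); lra).
    destruct (interval_bounds a b Ha0 Hab Hb1) as [L U].
    assert (Ch : RInt g 0 b = RInt g 0 a + RInt g a b).
    { symmetry. apply (@RInt_Chasles R_CompleteNormedModule); apply g_int. }
    change (sum_f_R0 (fun i => f (INR i / INR N)) (S k)) with
      (sum_f_R0 (fun i => f (INR i / INR N)) k + f b).
    fold b. rewrite Ch.
    assert (U' : INR N * RInt g a b <= (f a + f b) / 2).
    { replace ((f a + f b) / 2) with (INR N * ((b - a) * (f a + f b) / 2))
        by (rewrite Hba; field; lra).
      apply Rmult_le_compat_l; lra. }
    assert (L' : (f a + f b) / 2 + (f1 a - f1 b) / (4 * INR N) <= INR N * RInt g a b).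
    { replace ((f a + f b) / 2 + (f1 a - f1 b) / (4 * INR N)) with
        (INR N * ((b - a) * (f a + f b) / 2 + (f1 a - f1 b) * (b - a) * (b - a) / 4))
        by (rewrite Hba; field; lra).
      apply Rmult_le_compat_l; lra. }
    assert (E : (f1 b - f1 0) / (4 * INR N) = (f1 a - f1 0) / (4 * INR N) + (f1 b - f1 a) / (4 * INR N))
      by (field; lra).
    rewrite E.
    replace ((f1 a - f1 b) / (4 * INR N)) with (- ((f1 b - f1 a) / (4 * INR N))) in L'
      by (field; lra).
    split; nra.
Qed.

End Main.

Theorem lemma2p2 (f f1 f2 f3 : R -> R) (N : nat) :
  C3_on01 f f1 f2 f3 ->
  (forall x, 0 <= x <= 1 -> 0 <= f x /\ 0 <= f1 x /\ 0 <= f2 x /\ 0 <= f3 x) ->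
  (1 <= N)%nat ->
  0 <= sum_f_R0 (fun i => f (INR i / INR N)) N - INR N * RInt f 0 1 - (f 0 + f 1) / 2
  /\ sum_f_R0 (fun i => f (INR i / INR N)) N - INR N * RInt f 0 1 - (f 0 + f 1) / 2
     <= (f1 1 - f1 0) / (4 * INR N).
Proof.
  intros HC Hpos HN.
  assert (HNp : 0 < INR N) by (apply lt_0_INR; lia).
  pose proof (induct f f1 f2 f3 HC Hpos N HN N (Nat.le_refl N)) as K.
  replace (INR N / INR N) with 1 in K by (field; lra).
  assert (R : RInt f 0 1 = RInt (g f) 0 1).
  { apply RInt_ext. intros x Hx. unfold g. rewrite clamp_id; auto.
    rewrite Rmin_left, Rmax_right in Hx by lra. lra. }
  rewrite R. lra.
Qed.
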